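(* Let $X$ be a finite set with $|X|\ge2$, let $X_r$ be a disjoint copy of $X$, and regard $\bar{\mathcal{B}}(X)=\bar{\mathcal{B}}(X,X_r)$. A collection $\mathcal{S}$ of directed partial splits of $X$ is compatible if and only if $\{T_S:S\in\mathcal{S}\}$ is a compatible system of splits of $\bar{\mathcal{B}}(X)$.
   Context: A directed partial split of $X$ is an ordered pair $(A,B)$ of non-empty disjoint subsets of $X$. Two directed partial splits $(A,B),(C,D)$ are compatible if one of: $A\subseteq C$ and $B\supseteq D$; $A\subseteq X\setminus C$ and $B\supseteq X\setminus D$; $A\supseteq C$ and $B\subseteq D$; $A\supseteq X\setminus C$ and $B\subseteq X\setminus D$. A set of directed partial splits is compatible if its elements are pairwise compatible. $\bar{\mathcal{B}}(X,X_r)=\{e_x+e_{y'}:x\in X,y'\in X_r\}\subseteq\mathbb{R}^{X\cup X_r}$. For $S=(A,B)$, $T_S$ is the split of $\bar{\mathcal{B}}(X)$ with split hyperplane $\sum_{i\in A}f(i)=\sum_{j\in B'}f(j)$, where $B'\subseteq X_r$ is the copy of $B$. A split of a point configuration $\mathcal{A}$ is given by an affine hyperplane in the affine hull of $\mathcal{A}$ meeting the relative interior of $\operatorname{conv}\mathcal{A}$ and not strictly separating the endpoints of any edge of $\mathcal{A}$; a set of splits is compatible if for any two of them the intersection of their hyperplanes does not meet the relative interior of $\operatorname{conv}\mathcal{A}$. *)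

(* Defs.v *)
From HB Require Import structures.
From mathcomp Require Import all_boot all_order all_algebra.
Set Implicit Arguments. Unset Strict Implicit. Unset Printing Implicit Defensive.
Import Order.TTheory GRing.Theory Num.Theory.
Local Open Scope ring_scope.

Definition dps (X : finType) (S : {set X} * {set X}) : Prop :=
  [/\ S.1 != set0, S.2 != set0 & [disjoint S.1 & S.2]].

Definition dps_compat (X : finType) (S T : {set X} * {set X}) : Prop :=
  let: (A, B) := S in let: (C, D) := T in
  [\/ (A \subset C) && (D \subset B),
      (A \subset ~: C) && (~: D \subset B),
      (C \subset A) && (B \subset D)
    | (~: C \subset A) && (B \subset ~: D)].

Definition dps_set_compatible (X : finType) (SS : {set {set X} * {set X}}) : Prop :=
  forall S T, S \in SS -> T \in SS -> dps_compat S T.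

Section PointConfig.
Variables (R : realFieldType) (I D : finType).

Definition dot (a v : D -> R) : R := \sum_(d : D) a d * v d.

Definition in_conv (pts : I -> D -> R) (v : D -> R) : Prop :=
  exists lam : I -> R, [/\ forall k, 0 <= lam k, \sum_k lam k = 1
                         & forall d, v d = \sum_k lam k * pts k d].

Definition in_aff (pts : I -> D -> R) (v : D -> R) : Prop :=
  exists lam : I -> R, \sum_k lam k = 1 /\ forall d, v d = \sum_k lam k * pts k d.

Definition in_relint (pts : I -> D -> R) (v : D -> R) : Prop :=
  in_conv pts v /\
  exists eps : R, 0 < eps /\
    forall u, in_aff pts u -> (forall d, `|u d - v d| < eps) -> in_conv pts u.

Definition is_edge (pts : I -> D -> R) (k l : I) : Prop :=
  (exists d, pts k d != pts l d) /\
  exists w : D -> R,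
    [/\ forall m, dot w (pts m) <= dot w (pts k),
        dot w (pts k) = dot w (pts l)
      & forall m, dot w (pts m) = dot w (pts k) ->
          exists t : R, [/\ 0 <= t, t <= 1 &
            forall d, pts m d = (1 - t) * pts k d + t * pts l d]].

(* The hyperplane {v | dot a v = c} gives a split of the configuration:
   its trace on the affine hull is a hyperplane of the affine hull
   (it does not contain all points), it meets the relative interior of
   conv(pts), and it does not strictly separate the endpoints of any edge. *)
Definition is_split (pts : I -> D -> R) (a : D -> R) (c : R) : Prop :=
  [/\ exists k, dot a (pts k) != c,
      exists v, in_relint pts v /\ dot a v = c
    & forall k l, is_edge pts k l -> ~ (dot a (pts k) < c /\ c < dot a (pts l))].

Definition same_split (pts : I -> D -> R) (a1 : D -> R) (c1 : R)
  (a2 : D -> R) (c2 : R) : Prop :=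
  forall v, in_aff pts v -> (dot a1 v = c1 <-> dot a2 v = c2).

Definition compatible_split_system (J : Type) (P : J -> Prop)
  (pts : I -> D -> R) (a : J -> D -> R) (c : J -> R) : Prop :=
  (forall j, P j -> is_split pts (a j) (c j)) /\
  (forall j k, P j -> P k -> ~ same_split pts (a j) (c j) (a k) (c k) ->
     forall v, in_relint pts v -> dot (a j) v = c j -> dot (a k) v = c k -> False).

End PointConfig.

(* Coordinates of R^{X ∪ X_r} are indexed by X + X (inl x = x, inr y = y');
   points e_x + e_{y'} are indexed by (x, y) : X * X. *)
Definition Bpts (R : realFieldType) (X : finType) : X * X -> (X + X)%type -> R :=
  fun p d => match d with
             | inl x => (x == p.1)%:R
             | inr y => (y == p.2)%:R
             end.

(* Normal vector of the split hyperplane of T_S, S = (A,B):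
   sum_{i in A} f(i) - sum_{j in B'} f(j) = 0 *)
Definition Tnormal (R : realFieldType) (X : finType) (S : {set X} * {set X})
  : (X + X)%type -> R :=
  fun d => match d with
           | inl i => (i \in S.1)%:R
           | inr j => - (j \in S.2)%:R
           end.

(* Main.v *)
Require Import Defs.
From HB Require Import structures.
From mathcomp Require Import all_boot all_order all_algebra.
From mathcomp Require Import ring lra.
Set Implicit Arguments. Unset Strict Implicit. Unset Printing Implicit Defensive.

Definition bb := (bool * bool)%type.
Definition W := (nat * nat * nat * nat)%type.
Definition wf (w : W) (t : bb) : nat :=
  let: (a,b,c,d) := w in
  match t with (false,false) => a | (false,true) => b | (true,false) => c | (true,true) => d end.
Definition sw (f : bb -> bool) (w : W) (Pr : bb -> bool) : nat :=
  (if Pr (false,false) && f (false,false) then wf w (false,false) else 0) +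
  (if Pr (false,true) && f (false,true) then wf w (false,true) else 0) +
  (if Pr (true,false) && f (true,false) then wf w (true,false) else 0) +
  (if Pr (true,true) && f (true,true) then wf w (true,true) else 0).
Definition bbs : seq bb := [:: (false,false); (false,true); (true,false); (true,true)].
Definition W2 : seq (nat*nat) := [seq (a,b) | a <- [:: 1;2], b <- [:: 1;2]].
Definition W12 : seq W := [seq (ab.1,ab.2,cd.1,cd.2) | ab <- W2, cd <- W2].
Definition cands : seq (W * W) := [seq (p,q) | p <- W12, q <- W12].
Definition good (f g : bb -> bool) (pq : W * W) : bool :=
  [&& all (fun t => 0 < wf pq.1 t) bbs, all (fun t => 0 < wf pq.2 t) bbs,
      0 < sw f pq.1 xpredT, 0 < sw g pq.2 xpredT &
  (sw f pq.1 fst * sw g pq.2 xpredT == sw g pq.2 fst * sw f pq.1 xpredT) &&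
  (sw f pq.1 snd * sw g pq.2 xpredT == sw g pq.2 snd * sw f pq.1 xpredT)].
Definition tyf (a b c d : bool) (t : bb) : bool :=
  match t with (false,false) => a | (false,true) => b | (true,false) => c | (true,true) => d end.
Definition hyps (f g : bb -> bool) : bool :=
  [&& f (true,false) || f (true,true), f (false,false) || f (false,true),
      f (false,true) || f (true,true), f (false,false) || f (true,false),
      g (true,false) || g (true,true), g (false,false) || g (false,true),
      g (false,true) || g (true,true), g (false,false) || g (true,false),
      f (true,false) || g (false,true), f (true,true) || g (false,false),
      f (false,true) || g (true,false) & f (false,false) || g (true,true)].
Definition pairgood (f g : bb -> bool) (ts : bb * bb) : bool :=
  [&& f ts.1, g ts.2 & (ts.1.1 == ts.2.1) != (ts.1.2 == ts.2.2)].

Lemma comb_weights_aux a b c d a' b' c' d' :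
  hyps (tyf a b c d) (tyf a' b' c' d') -> has (good (tyf a b c d) (tyf a' b' c' d')) cands.
Proof. by case: a; case: b; case: c; case: d; case: a'; case: b'; case: c'; case: d'; vm_compute. Qed.

Lemma comb_pair_aux a b c d a' b' c' d' :
  hyps (tyf a b c d) (tyf a' b' c' d') ->
  has (pairgood (tyf a b c d) (tyf a' b' c' d')) [seq (t,s) | t <- bbs, s <- bbs].
Proof. by case: a; case: b; case: c; case: d; case: a'; case: b'; case: c'; case: d'; vm_compute. Qed.

Import Order.TTheory GRing.Theory Num.Theory.
Local Open Scope ring_scope.

Section Geo.
Variables (R : realFieldType) (X : finType).
Local Notation pts := (@Bpts R X).
Implicit Types (v : (X + X)%type -> R).

Definition sL v := \sum_x v (inl x).
Definition sR v := \sum_y v (inr y).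

Lemma dotE (a v : (X + X)%type -> R) :
  dot a v = \sum_x a (inl x) * v (inl x) + \sum_y a (inr y) * v (inr y).
Proof. by rewrite /dot big_sumType. Qed.

Lemma sum_ind (a : X) : \sum_x ((x == a)%:R : R) = 1.
Proof. by rewrite (bigD1 a) //= eqxx big1 ?addr0 // => x /negbTE ->. Qed.

Lemma sum_indr (a : X) (F : X -> R) : \sum_x (x == a)%:R * F x = F a.
Proof. by rewrite (bigD1 a) //= eqxx mul1r big1 ?addr0 // => x /negbTE ->; rewrite mul0r. Qed.

Lemma sum_indl (a : X) (F : X -> R) : \sum_x (a == x)%:R * F x = F a.
Proof. by rewrite -(sum_indr a); apply: eq_bigr => x _; rewrite eq_sym. Qed.

Lemma dot_pts a (p : X * X) : dot a (pts p) = a (inl p.1) + a (inr p.2).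
Proof.
rewrite dotE /Bpts; congr (_ + _).
  by rewrite -(sum_indr p.1 (fun x => a (inl x))); apply: eq_bigr => x _; rewrite mulrC.
by rewrite -(sum_indr p.2 (fun x => a (inr x))); apply: eq_bigr => x _; rewrite mulrC.
Qed.

Lemma sum_pair (F : X * X -> R) : \sum_k F k = \sum_x \sum_y F (x, y).
Proof. by rewrite pair_big; apply: eq_bigr => -[]. Qed.

Lemma sL_comb (lam : X * X -> R) v :
  (forall d, v d = \sum_k lam k * pts k d) -> sL v = \sum_k lam k.
Proof.
move=> hv; rewrite /sL (eq_bigr _ (fun x _ => hv (inl x))) exchange_big /=.
apply: eq_bigr => k _; rewrite -big_distrr /= (eq_bigr (fun x => (x == k.1)%:R)) //.
by rewrite sum_ind mulr1.
Qed.

Lemma sR_comb (lam : X * X -> R) v :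
  (forall d, v d = \sum_k lam k * pts k d) -> sR v = \sum_k lam k.
Proof.
move=> hv; rewrite /sR (eq_bigr _ (fun x _ => hv (inr x))) exchange_big /=.
apply: eq_bigr => k _; rewrite -big_distrr /= (eq_bigr (fun x => (x == k.2)%:R)) //.
by rewrite sum_ind mulr1.
Qed.

Lemma aff_sums v : in_aff pts v -> sL v = 1 /\ sR v = 1.
Proof. by case=> lam [h1 hv]; rewrite (sL_comb hv) (sR_comb hv). Qed.

Lemma conv_facts v : in_conv pts v -> [/\ sL v = 1, sR v = 1 & forall d, 0 <= v d].
Proof.
case=> lam [h0 h1 hv]; split; rewrite ?(sL_comb hv) ?(sR_comb hv) //.
move=> d; rewrite hv; apply: sumr_ge0 => k _; apply: mulr_ge0 => //.
by case: d => [x|y]; rewrite /Bpts ler0n.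
Qed.

Lemma sums_conv v : sL v = 1 -> sR v = 1 -> (forall d, 0 <= v d) -> in_conv pts v.
Proof.
move=> hL hR h0; exists (fun k => v (inl k.1) * v (inr k.2)); split.
- by move=> k; apply: mulr_ge0.
- rewrite sum_pair -hL; apply: eq_bigr => x _ /=; by rewrite -big_distrr /= -/(sR v) hR mulr1.
- case=> [x0|y0]; rewrite sum_pair /Bpts /=.
    rewrite (eq_bigr (fun x => (x0 == x)%:R * (v (inl x) * sR v))).
      by rewrite sum_indl hR mulr1.
    by move=> x _; rewrite /sR big_distrr big_distrr /=; apply: eq_bigr => y _; rewrite mulrC mulrA.
  rewrite exchange_big /= (eq_bigr (fun y => (y0 == y)%:R * (v (inr y) * sL v))).
    by rewrite sum_indl hL mulr1.
  by move=> y _; rewrite /sL big_distrr big_distrr /=; apply: eq_bigr => x _;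
    rewrite mulrC [v (inl x) * _]mulrC mulrA.
Qed.

Lemma sums_aff (x0 y0 : X) v : sL v = 1 -> sR v = 1 -> in_aff pts v.
Proof.
move=> hL hR.
exists (fun k => v (inl k.1) * (k.2 == y0)%:R + (k.1 == x0)%:R * v (inr k.2)
                 - (k.1 == x0)%:R * (k.2 == y0)%:R); split.
- rewrite sum_pair -[in RHS]hL; apply: eq_bigr => x _ /=.
  rewrite sumrB big_split /= -!big_distrr /= sum_ind.
  by rewrite -/(sR v) hR !mulr1 addrK.
- case=> [x1|y1]; rewrite sum_pair /Bpts /=.
  + rewrite (eq_bigr (fun x => (x1 == x)%:R * v (inl x))) ?sum_indl // => x _ /=.
    rewrite -big_distrl /= sumrB big_split /= -!big_distrr /= sum_ind -/(sR v) hR.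
    by rewrite !mulr1 addrK mulrC.
  + rewrite exchange_big /= (eq_bigr (fun y => (y1 == y)%:R * v (inr y))) ?sum_indl // => y _ /=.
    rewrite -big_distrl /= sumrB big_split /= -!big_distrl /= sum_ind -/(sL v) hL.
    by rewrite !mul1r [_ + v _]addrC addrK mulrC.
Qed.

Definition ind (e : (X + X)%type) : (X + X)%type -> R := fun d => (d == e)%:R.

Lemma inl_eq (a b : X) : (inl a == inl b :> (X + X)%type) = (a == b).
Proof. by apply/eqP/eqP => [[]|->]. Qed.
Lemma inr_eq (a b : X) : (inr a == inr b :> (X + X)%type) = (a == b).
Proof. by apply/eqP/eqP => [[]|->]. Qed.

Lemma sL_ind_l z : sL (ind (inl z)) = 1.
Proof. by rewrite /sL /ind -[RHS](sum_ind z); apply: eq_bigr => x _; rewrite inl_eq. Qed.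
Lemma sR_ind_l z : sR (ind (inl z)) = 0.
Proof. by rewrite /sR /ind big1. Qed.
Lemma sL_ind_r z : sL (ind (inr z)) = 0.
Proof. by rewrite /sL /ind big1. Qed.
Lemma sR_ind_r z : sR (ind (inr z)) = 1.
Proof. by rewrite /sR /ind -[RHS](sum_ind z); apply: eq_bigr => x _; rewrite inr_eq. Qed.

Lemma sL_lin f g h (c : R) : sL (fun d => f d + c * (g d - h d)) = sL f + c * (sL g - sL h).
Proof. by rewrite /sL big_split /= -big_distrr sumrB. Qed.
Lemma sR_lin f g h (c : R) : sR (fun d => f d + c * (g d - h d)) = sR f + c * (sR g - sR h).
Proof. by rewrite /sR big_split /= -big_distrr sumrB. Qed.

Lemma other (z : X) : (1 < #|X|)%N -> exists z', z' != z.
Proof.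
move=> hX; case: (pickP (fun z' => z' != z)) => [z' hz'|hall]; first by exists z'.
have : (#|X| <= #|pred1 z|)%N.
  by apply: subset_leq_card; apply/subsetP => w _; move: (hall w) => /negbFE.
by rewrite card1 leqNgt hX.
Qed.

Lemma relint_pos v : (1 < #|X|)%N -> in_relint pts v ->
  [/\ sL v = 1, sR v = 1 & forall d, 0 < v d].
Proof.
move=> hX [hc [eps [he hn]]]; have [h1 h2 h0] := conv_facts hc; split => // d.
rewrite lt_def h0 andbT; apply/negP => /eqP hd.
have [e2 [hne hsL hsR]] : exists e2, [/\ e2 != d, sL (ind e2) = sL (ind d) &
                                      sR (ind e2) = sR (ind d)].
  case: d hd => z _; have [z' hz'] := other z hX.
    by exists (inl z'); rewrite !sL_ind_l !sR_ind_l; split => //; apply: contra hz' => /eqP [->].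
  by exists (inr z'); rewrite !sL_ind_r !sR_ind_r; split => //; apply: contra hz' => /eqP [->].
set u := fun d' => v d' + eps / 2 * (ind e2 d' - ind d d').
have haff : in_aff pts u.
  have z0 : X by case: d {hd hne hsL hsR u} => z.
  by apply: (sums_aff z0 z0); rewrite ?sL_lin ?sR_lin ?hsL ?hsR subrr mulr0 addr0.
have hcl : forall d', `|u d' - v d'| < eps.
  move=> d'; rewrite /u addrC addKr normrM gtr0_norm ?divr_gt0 //.
  rewrite /ind; case: (d' == e2); case: (d' == d); rewrite /= ?subrr ?subr0 ?sub0r ?normrN
    ?normr0 ?normr1 ?mulr0 ?mulr1 ?divr_gt0 //;
  by rewrite ltr_pdivrMr // ltr_pMr // ltr1n.
have [_ _ /(_ d)] := conv_facts (hn u haff hcl).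
have hne2 : (d == e2) = false by rewrite eq_sym (negbTE hne).
rewrite /u /ind eqxx hne2 hd /= add0r sub0r mulrN oppr_ge0 => hle.
by move: (divr_gt0 he (ltr0Sn _ 1)); rewrite ltNge -(mulr1 (eps / 2)) hle.
Qed.

Lemma pos_relint (x0 : X) v : sL v = 1 -> sR v = 1 -> (forall d, 0 < v d) -> in_relint pts v.
Proof.
move=> h1 h2 h0; split; first by apply: sums_conv => // d; apply: ltW.
case: (@arg_minP _ _ _ (inl x0) xpredT v isT) => m _ hm.
exists (v m); split => // u hu hcl.
have [hu1 hu2] := aff_sums hu; apply: sums_conv => // d.
have := hcl d; rewrite ltr_norml => /andP [+ _].
rewrite ltrBrDl ltrBlDr => hlt.
rewrite -(lerD2r (v m)) add0r; apply: ltW; exact: le_lt_trans (hm d isT) hlt.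
Qed.

Lemma dot_T (S : {set X} * {set X}) v :
  dot (Tnormal R S) v = \sum_(x in S.1) v (inl x) - \sum_(y in S.2) v (inr y).
Proof.
rewrite dotE /Tnormal (big_mkcond (fun x => x \in S.1)) (big_mkcond (fun y => y \in S.2)) -sumrN; congr (_ + _).
  by apply: eq_bigr => x _; case: (x \in S.1); rewrite ?mul1r ?mul0r.
by apply: eq_bigr => x _; case: (x \in S.2); rewrite /= ?mulr1n ?mulr0n ?oppr0 ?mulN1r ?mul0r.
Qed.

Lemma realize (T : finType) (ty : X -> T) (p : T -> R) : (forall t, 0 < p t) ->
  exists u : X -> R, (forall x, 0 < u x) /\ forall Pr : pred T,
   \sum_(x | Pr (ty x)) u x = \sum_(t | Pr t && (0 < #|[pred x | ty x == t]|)%N) p t.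
Proof.
move=> hp; exists (fun x => p (ty x) / #|[pred x' | ty x' == ty x]|%:R); split.
  move=> x; apply: divr_gt0 => //; rewrite ltr0n; apply/card_gt0P; exists x.
  by rewrite inE.
move=> Pr; rewrite (partition_big ty Pr) //= big_mkcondr /=; apply: eq_bigr => t ht.
rewrite (eq_bigl (fun x => x \in [pred x | ty x == t])); last first.
  by move=> x /=; rewrite inE; case: eqP => [->|_]; rewrite ?ht ?andbF.
rewrite (eq_bigr (fun _ => p t / #|[pred x' | ty x' == t]|%:R)); last first.
  by move=> x; rewrite inE => /eqP ->.
rewrite sumr_const; case: ifP => hc.
  by rewrite -(mulr_natr (p t / _)) divfK // pnatr_eq0 -lt0n.
by move/negbT: hc; rewrite -leqNgt leqn0 => /eqP ->; rewrite mulr0n.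
Qed.

Lemma bool_sum (c Pr : pred bool) (F : bool -> R) :
  \sum_(t | Pr t && c t) F t =
  (if Pr true && c true then F true else 0) + (if Pr false && c false then F false else 0).
Proof. by rewrite big_mkcond big_bool. Qed.

Lemma dotT_pts (S : {set X} * {set X}) x y :
  dot (Tnormal R S) (pts (x, y)) = (x \in S.1)%:R - (y \in S.2)%:R.
Proof. by rewrite dot_pts. Qed.

Lemma dotT_neg (S : {set X} * {set X}) x y :
  dot (Tnormal R S) (pts (x, y)) < 0 -> x \notin S.1 /\ y \in S.2.
Proof. by rewrite dotT_pts; case: (x \in S.1); case: (y \in S.2) => /=; lra. Qed.

Lemma dotT_pos (S : {set X} * {set X}) x y :
  0 < dot (Tnormal R S) (pts (x, y)) -> x \in S.1 /\ y \notin S.2.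
Proof. by rewrite dotT_pts; case: (x \in S.1); case: (y \in S.2) => /=; lra. Qed.

Lemma half_point (A : {set X}) a b : a \in A -> b \notin A ->
  exists u : X -> R, [/\ forall x, 0 < u x, \sum_x u x = 1 & \sum_(x in A) u x = 1 / 2].
Proof.
move=> ha hb.
have hh : forall t : bool, 0 < (fun _ => 1 / 2 : R) t by move=> t; lra.
have [u [hu hs]] := realize (fun x => x \in A) hh.
have pt : (0 < #|[pred x | (x \in A) == true]|)%N by apply/card_gt0P; exists a; rewrite inE ha.
have pf : (0 < #|[pred x | (x \in A) == false]|)%N by apply/card_gt0P; exists b; rewrite inE (negbTE hb).
exists u; split => //.
  have := hs xpredT; rewrite bool_sum /= pt pf /= => h.
  by transitivity (1 / 2 + 1 / 2 : R); [exact: h | rewrite -splitr].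
have := hs idfun; rewrite bool_sum /= pt /= => h.
by rewrite -[RHS]addr0 -h.
Qed.

Definition mkv (u w : X -> R) : (X + X)%type -> R :=
  fun d => match d with inl x => u x | inr y => w y end.

Lemma split_T (S : {set X} * {set X}) : dps S -> is_split pts (Tnormal R S) 0.
Proof.
case: S => A B [/= /set0Pn [a ha] /set0Pn [b hb] hdis].
have haB : a \notin B by rewrite (disjointFr hdis ha).
have hbA : b \notin A by rewrite (disjointFl hdis hb).
split.
- exists (a, a); rewrite dotT_pts /= ha (negbTE haB) /= subr0; exact: oner_neq0.
- have [u [hu1 hu2 hu3]] := half_point ha hbA.
  have [w [hw1 hw2 hw3]] := half_point hb haB.
  exists (mkv u w); split.
    by apply: (pos_relint a) => // -[x|y] /=.
  by rewrite dot_T /= hu3 hw3 subrr.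
- move=> [x y] [x' y'] [_ [w [hmax heq hseg]]] [/dotT_neg [/= hxA hyB] /dotT_pos [/= hxA' hyB']].
  have hm1 := hmax (x, y'); have hm2 := hmax (x', y).
  move: hm1 hm2 heq; rewrite !dot_pts /= => hm1 hm2 heq.
  have [t [_ _ ht]] := hseg (x, y') (ltac:(rewrite !dot_pts /=; lra)).
  have hxx : (x == x') = false by apply/eqP => exx; rewrite exx hxA' in hxA.
  have hyy : (y' == y) = false by apply/eqP => eyy; rewrite eyy hyB in hyB'.
  have := ht (inl x); have := ht (inr y'); rewrite /Bpts /= !eqxx hxx hyy /=.
  lra.
Qed.

Lemma sumC (C : {set X}) (F : X -> R) :
  \sum_(x in ~: C) F x = \sum_x F x - \sum_(x in C) F x.
Proof.
rewrite [in RHS](bigID (mem C)) /= addrC addrK.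
by apply: eq_bigl => x; rewrite inE.
Qed.

Lemma sum_split (A C : {set X}) (F : X -> R) : A \subset C ->
  \sum_(x in C) F x = \sum_(x in A) F x + \sum_(x in C :\: A) F x.
Proof.
move=> hAC; rewrite (big_setID A) /=; congr (_ + _).
by apply: eq_bigl => x; rewrite (setIidPr hAC).
Qed.

Lemma pos_sum0 (F : X -> R) (E : {set X}) : (forall x, 0 < F x) ->
  \sum_(x in E) F x = 0 -> E = set0.
Proof.
move=> hF /psumr_eq0P h; apply/setP => x; rewrite inE.
apply/negP => hx; have := h (fun i _ => ltW (hF i)) x hx; have := hF x; rewrite lt_def => /andP [+ _].
by move/eqP.
Qed.

Lemma key (f g : X -> R) (hf : forall x, 0 < f x) (hg : forall y, 0 < g y)
  (A B C D : {set X}) : A \subset C -> D \subset B ->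
  \sum_(x in A) f x = \sum_(y in B) g y ->
  \sum_(x in C) f x = \sum_(y in D) g y -> A = C /\ B = D.
Proof.
move=> hAC hDB e1 e2.
move: e1 e2; rewrite (sum_split f hAC) (sum_split g hDB) => e1 e2.
have hs : \sum_(x in C :\: A) f x + \sum_(y in B :\: D) g y = 0 by lra.
have h1 : 0 <= \sum_(x in C :\: A) f x by apply: sumr_ge0 => x _; apply: ltW.
have h2 : 0 <= \sum_(y in B :\: D) g y by apply: sumr_ge0 => x _; apply: ltW.
have /pos_sum0 -/(_ hf) /eqP : \sum_(x in C :\: A) f x = 0 by lra.
have /pos_sum0 -/(_ hg) /eqP : \sum_(y in B :\: D) g y = 0 by lra.
rewrite !setD_eq0 => hBD hCA; split; apply/eqP; rewrite eqEsubset ?hAC ?hCA ?hBD ?hDB //.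
Qed.

Lemma same_comp (C D : {set X}) :
  same_split pts (Tnormal R (~: C, ~: D)) 0 (Tnormal R (C, D)) 0.
Proof.
move=> w hw; have [h1 h2] := aff_sums hw; rewrite !dot_T /= !sumC -/(sL w) -/(sR w) h1 h2.
split => h; lra.
Qed.

Lemma same_refl S : same_split pts (Tnormal R S) 0 (Tnormal R S) 0.
Proof. by []. Qed.

Lemma same_sym a1 c1 a2 c2 : same_split pts a1 c1 a2 c2 -> same_split pts a2 c2 a1 c1.
Proof. by move=> h w hw; have := h w hw; tauto. Qed.


Lemma fwd (hX : (1 < #|X|)%N) (SS : {set {set X} * {set X}}) (hSS : forall S, S \in SS -> dps S) :
  dps_set_compatible SS ->
  compatible_split_system (fun S => S \in SS) pts (@Tnormal R X) (fun _ => 0).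
Proof.
move=> hc; split; first by move=> S hS; apply: split_T; apply: hSS.
move=> S T hS hT hns v hv e1 e2.
have [hL hR hpos] := relint_pos hX hv.
have := hc S T hS hT; case: S {hS} hns e1 => A B; case: T {hT} e2 => C D.
rewrite !dot_T /= => e2 hns e1.
have hf : forall x, 0 < v (inl x) by move=> x; apply: hpos.
have hg : forall y, 0 < v (inr y) by move=> x; apply: hpos.
have eA : \sum_(x in A) v (inl x) = \sum_(y in B) v (inr y) by lra.
have eC : \sum_(x in C) v (inl x) = \sum_(y in D) v (inr y) by lra.
have eCc : \sum_(x in ~: C) v (inl x) = \sum_(y in ~: D) v (inr y).
  by rewrite !sumC -/(sL v) -/(sR v) hL hR eC.
have eAc : \sum_(x in ~: A) v (inl x) = \sum_(y in ~: B) v (inr y).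
  by rewrite !sumC -/(sL v) -/(sR v) hL hR eA.
case=> /andP [h3 h4].
- have [e3 e4] := key hf hg h3 h4 eA eC; apply: hns; rewrite -e3 -e4; exact: same_refl.
- have [e3 e4] := key hf hg h3 h4 eA eCc; apply: hns; rewrite e3 e4; exact: same_comp.
- have [e3 e4] := key hf hg h3 h4 eC eA; apply: hns; rewrite -e3 -e4; exact: same_refl.
- have [e3 e4] := key hf hg h3 h4 eCc eA; apply: hns; rewrite -e3 -e4; exact: same_comp.
Qed.


Lemma if_natr (b : bool) (n : nat) : ((if b then n else 0%N)%:R : R) = if b then n%:R else 0.
Proof. by case: b. Qed.

Lemma sum_bb (F : bb -> R) :
  \sum_t F t = F (true,true) + F (true,false) + (F (false,true) + F (false,false)).
Proof.
transitivity (\sum_(p : bb) F (p.1, p.2)); first by apply: eq_bigr => -[].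
by rewrite -(pair_bigA _ (fun a b => F (a, b))) /= !big_bool.
Qed.

Lemma sw_R (f : bb -> bool) w (Pr : pred bb) (S : R) :
  \sum_(t | Pr t && f t) ((wf w t)%:R / S) = (sw f w Pr)%:R / S.
Proof.
rewrite big_mkcond sum_bb /sw !natrD !if_natr /=.
case: (Pr (false,false) && f (false,false)); case: (Pr (false,true) && f (false,true));
case: (Pr (true,false) && f (true,false)); case: (Pr (true,true) && f (true,true)); ring.
Qed.

Lemma cnt_ex (T : finType) (ty : X -> T) t :
  (0 < #|[pred x | ty x == t]|)%N = [exists x, ty x == t].
Proof.
by apply/card_gt0P/existsP => [[x hx]|[x hx]]; exists x; rewrite ?inE in hx *.
Qed.

Lemma realize_w (A C : {set X}) (w : W) :
  all (fun t => (0 < wf w t)%N) bbs ->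
  let f := fun t => [exists x, ((x \in A), (x \in C)) == t] in
  (0 < sw f w xpredT)%N ->
  exists u : X -> R, [/\ forall x, 0 < u x, \sum_x u x = 1,
     \sum_(x in A) u x = (sw f w fst)%:R / (sw f w xpredT)%:R &
     \sum_(x in C) u x = (sw f w snd)%:R / (sw f w xpredT)%:R].
Proof.
move=> hw f hT.
have hp : forall t, 0 < (fun t => (wf w t)%:R / (sw f w xpredT)%:R : R) t.
  move=> t; apply: divr_gt0; rewrite ltr0n //.
  move/allP: hw => /(_ t); apply. by move: t => [[] []].
have [u [hu hs]] := realize (fun x => ((x \in A), (x \in C))) hp.
have hs' : forall Pr, \sum_(x | Pr ((x \in A), (x \in C))) u x
    = (sw f w Pr)%:R / (sw f w xpredT)%:R.
  move=> Pr; rewrite hs -sw_R; apply: eq_bigl => t; by rewrite cnt_ex.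
exists u; split => //.
- by rewrite (hs' xpredT) divff // pnatr_eq0 -lt0n.
- exact: (hs' fst).
- exact: (hs' snd).
Qed.


Lemma frac_eq (a s b t : nat) : (0 < s)%N -> (0 < t)%N -> (a * t = b * s)%N ->
  (a%:R / s%:R : R) = b%:R / t%:R.
Proof. by move=> hs ht e; apply/eqP; rewrite eqr_div ?pnatr_eq0 -?lt0n // -!natrM e. Qed.

Lemma sL_pts (p : X * X) : sL (pts p) = 1.
Proof. by rewrite /sL /Bpts /= sum_ind. Qed.
Lemma sR_pts (p : X * X) : sR (pts p) = 1.
Proof. by rewrite /sR /Bpts /= sum_ind. Qed.

Lemma natr_diff (b1 b2 : bool) : b1 != b2 -> (b1%:R - b2%:R : R) != 0.
Proof. by case: b1; case: b2 => //= _; rewrite ?subr0 ?sub0r ?oppr_eq0 oner_eq0. Qed.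

Lemma natr_same (b1 b2 : bool) : b1 == b2 -> (b1%:R - b2%:R : R) = 0.
Proof. by move/eqP ->; rewrite subrr. Qed.

Lemma bwd (hX : (1 < #|X|)%N) (SS : {set {set X} * {set X}})
  (hSS : forall S, S \in SS -> dps S) :
  compatible_split_system (fun S => S \in SS) pts (@Tnormal R X) (fun _ => 0) ->
  dps_set_compatible SS.
Proof.
move=> [_ hsys] S T hS hT.
have := hsys S T hS hT; move: (hSS S hS) (hSS T hT).
case: S {hS} => A B; case: T {hT} => C D.
move=> [/= /set0Pn [a ha] /set0Pn [b hb] hAB] [/= /set0Pn [c hc] /set0Pn [d hd] hCD] hsy.
rewrite /dps_compat.
case: (boolP [|| (A \subset C) && (D \subset B), (A \subset ~: C) && (~: D \subset B),
   (C \subset A) && (B \subset D) | (~: C \subset A) && (B \subset ~: D)]) => [/or4P //|].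
rewrite !negb_or !negb_and => /and4P [n1 n2 n3 n4].
exfalso.
set f := fun t => [exists x, ((x \in A), (x \in C)) == t].
set g := fun t => [exists x, ((x \in B), (x \in D)) == t].
have fx : forall x, f ((x \in A), (x \in C)) by move=> x; apply/existsP; exists x.
have gx : forall x, g ((x \in B), (x \in D)) by move=> x; apply/existsP; exists x.
have haB : a \notin B by rewrite (disjointFr hAB ha).
have hbA : b \notin A by rewrite (disjointFl hAB hb).
have hcD : c \notin D by rewrite (disjointFr hCD hc).
have hdC : d \notin C by rewrite (disjointFl hCD hd).
have H : hyps f g.
  rewrite /hyps; repeat (apply/andP; split).
  - by move: (fx a); rewrite ha; case: (a \in C) => ->; rewrite ?orbT.
  - by move: (fx b); rewrite (negbTE hbA); case: (b \in C) => ->; rewrite ?orbT.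
  - by move: (fx c); rewrite hc; case: (c \in A) => ->; rewrite ?orbT.
  - by move: (fx d); rewrite (negbTE hdC); case: (d \in A) => ->; rewrite ?orbT.
  - by move: (gx b); rewrite hb; case: (b \in D) => ->; rewrite ?orbT.
  - by move: (gx a); rewrite (negbTE haB); case: (a \in D) => ->; rewrite ?orbT.
  - by move: (gx d); rewrite hd; case: (d \in B) => ->; rewrite ?orbT.
  - by move: (gx c); rewrite (negbTE hcD); case: (c \in B) => ->; rewrite ?orbT.
  - case/orP: n1 => /subsetPn [x h1 h2].
      by move: (fx x); rewrite h1 (negbTE h2) => ->.
    by move: (gx x); rewrite h1 (negbTE h2) => ->; rewrite orbT.
  - case/orP: n2 => /subsetPn [x h1 h2]; rewrite inE ?negbK in h1 h2.
      by move: (fx x); rewrite h1 h2 => ->.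
    by move: (gx x); rewrite (negbTE h1) (negbTE h2) => ->; rewrite orbT.
  - case/orP: n3 => /subsetPn [x h1 h2].
      by move: (fx x); rewrite h1 (negbTE h2) => ->.
    by move: (gx x); rewrite h1 (negbTE h2) => ->; rewrite orbT.
  - case/orP: n4 => /subsetPn [x h1 h2]; rewrite ?inE ?negbK in h1 h2.
      by move: (fx x); rewrite (negbTE h1) (negbTE h2) => ->.
    by move: (gx x); rewrite h1 h2 => ->; rewrite orbT.
have hw : has (good f g) cands.
  exact: (@comb_weights_aux (f (false,false)) (f (false,true)) (f (true,false)) (f (true,true))
     (g (false,false)) (g (false,true)) (g (true,false)) (g (true,true)) H).
have hpr : has (pairgood f g) [seq (t,s) | t <- bbs, s <- bbs].
  exact: (@comb_pair_aux (f (false,false)) (f (false,true)) (f (true,false)) (f (true,true))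
     (g (false,false)) (g (false,true)) (g (true,false)) (g (true,true)) H).
case/hasP: hw => [[p q] _ /and5P [hp hq hsp hsq /andP [e1 e2]]].
have [u [hu hu1 huA huC]] := realize_w (A := A) (C := C) hp hsp.
have [w [hw hw1 hwB hwD]] := realize_w (A := B) (C := D) hq hsq.
have hrel : in_relint pts (mkv u w).
  by apply: (pos_relint a) => // -[x|y] /=.
apply: (hsy _ (mkv u w) hrel).
- move=> hsame; case/hasP: hpr => [[t s] _ /and3P [ft gs hts]].
  case/existsP: ft => x /eqP ext; case/existsP: gs => y /eqP eys.
  rewrite -ext -eys /= in hts.
  have := hsame (pts (x, y)) (sums_aff x x (sL_pts _) (sR_pts _)); rewrite !dotT_pts /=.
  case E: ((x \in A) == (y \in B)) hts => /= hts.
    by case=> h1 _; move: (h1 (natr_same E)); apply/eqP; apply: natr_diff.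
  case=> _ h2; move: (negbT E) => /natr_diff /eqP; apply; apply: h2; apply: natr_same.
  by move: hts; case: ((x \in C) == (y \in D)).
- rewrite dot_T /= huA hwB (frac_eq hsp hsq (eqP e1)) subrr //.
- rewrite dot_T /= huC hwD (frac_eq hsp hsq (eqP e2)) subrr //.
Qed.

End Geo.

Unset Implicit Arguments.
Set Strict Implicit.

Theorem mainTheorem5 (R : realFieldType) (X : finType) (hX : (2 <= #|X|)%N)
  (SS : {set {set X} * {set X}}) (hSS : forall S, S \in SS -> dps S) :
  dps_set_compatible SS <->
  compatible_split_system (fun S => S \in SS) (@Bpts R X)
    (@Tnormal R X) (fun _ => 0).
Proof. by split; [exact: fwd | exact: bwd]. Qed.
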